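(* Let $A\in\mathbb{R}^{m\times n}$ have singular value decomposition $A=U\Sigma V^\top$ (with $U\in\mathbb{R}^{m\times m}$, $V\in\mathbb{R}^{n\times n}$ orthogonal), let $r=\operatorname{rank}(A)$, and let $\lambda:=(\sigma_1^2(A),\ldots,\sigma_r^2(A),0,\ldots,0)^\top\in\mathbb{R}^m$ (the eigenvalues of $AA^\top$ in the order matching the columns of $U$). Let $1\le s\le r$ and let $\mathcal{S}$ be a random variable with $\mathcal{S}\sim\operatorname{Vol}_s(AA^\top)$. Then $$\mathbb{E}[A_{\mathcal{S}}^\dagger A_{\mathcal{S}}]=A^\top H_s A,\qquad\text{where}\quad H_s:=\frac{U\operatorname{diag}\big(e_{s-1}(\lambda_{-1}),\ldots,e_{s-1}(\lambda_{-m})\big)U^\top}{e_s(\lambda)}.$$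
   Context: $\sigma_1(A)\ge\cdots\ge\sigma_r(A)>0$ are the nonzero singular values of $A$. For $\xi\in\mathbb{R}^p$ and $1\le \ell\le p$, $e_\ell(\xi):=\sum_{1\le i_1<\cdots<i_\ell\le p}\xi_{i_1}\cdots\xi_{i_\ell}$ is the $\ell$-th elementary symmetric polynomial, and $e_0(\xi):=1$. For $i\in[m]$, $\lambda_{-i}\in\mathbb{R}^{m-1}$ is $\lambda$ with its $i$-th entry removed. For $\mathcal{S}\subseteq[m]=\{1,\dots,m\}$, $A_{\mathcal{S}}$ is the submatrix of $A$ consisting of the rows indexed by $\mathcal{S}$, and $A_{\mathcal{S}}^\dagger$ its Moore–Penrose pseudoinverse. Volume sampling: $\binom{[m]}{s}$ denotes the set of $s$-element subsets of $[m]$; a random variable $\mathcal{S}_0$ with values in $\binom{[m]}{s}$ satisfies $\mathcal{S}_0\sim\operatorname{Vol}_s(AA^\top)$ if $\mathbb{P}(\mathcal{S}_0=\mathcal{S})=\det(A_{\mathcal{S}}A_{\mathcal{S}}^\top)/\sum_{\mathcal{J}\in\binom{[m]}{s}}\det(A_{\mathcal{J}}A_{\mathcal{J}}^\top)$ for all $\mathcal{S}\in\binom{[m]}{s}$. *)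

(* Defs.v *)
From HB Require Import structures.
From mathcomp Require Import all_boot all_order all_algebra.
From Stdlib Require Import ClassicalEpsilon.
Set Implicit Arguments. Unset Strict Implicit. Unset Printing Implicit Defensive.
Import Order.TTheory GRing.Theory Num.Theory.
Local Open Scope ring_scope.

Definition penrose (R : realFieldType) (p q : nat)
  (A : 'M[R]_(p, q)) (X : 'M[R]_(q, p)) : Prop :=
  [/\ A *m X *m A = A, X *m A *m X = X,
      (A *m X)^T = A *m X & (X *m A)^T = X *m A].

(* The Moore--Penrose pseudoinverse (it exists and is unique; chosen by
   classical epsilon among matrices satisfying the Penrose conditions). *)
Definition pinv (R : realFieldType) (p q : nat) (A : 'M[R]_(p, q)) : 'M[R]_(q, p) :=
  epsilon (inhabits 0) (penrose A).

(* A_S : rows of A indexed by S (in increasing order). *)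
Definition rows_of (R : realFieldType) (m n : nat) (A : 'M[R]_(m, n))
  (S : {set 'I_m}) : 'M[R]_(#|S|, n) :=
  rowsub (fun i : 'I_#|S| => enum_val i) A.

Definition elem_sym (R : realFieldType) (p k : nat) (xi : 'I_p -> R) : R :=
  \sum_(I : {set 'I_p} | #|I| == k) \prod_(i in I) xi i.

Definition remove_at (R : realFieldType) (p : nat) (xi : 'I_p -> R) (i : 'I_p)
  : 'I_p.-1 -> R := fun j => xi (lift i j).

Definition vol_prob (R : realFieldType) (m n s : nat) (A : 'M[R]_(m, n))
  (S : {set 'I_m}) : R :=
  \det (rows_of A S *m (rows_of A S)^T) /
  \sum_(J : {set 'I_m} | #|J| == s) \det (rows_of A J *m (rows_of A J)^T).

Definition vol_expect_proj (R : realFieldType) (m n s : nat) (A : 'M[R]_(m, n))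
  : 'M[R]_n :=
  \sum_(S : {set 'I_m} | #|S| == s)
     vol_prob s A S *: (pinv (rows_of A S) *m rows_of A S).

(* Main.v *)
Require Import Defs.
From HB Require Import structures.
From mathcomp Require Import all_boot all_order all_algebra.
From mathcomp Require Import fingroup perm.
From Stdlib Require Import ClassicalEpsilon.
Set Implicit Arguments. Unset Strict Implicit. Unset Printing Implicit Defensive.
Import Order.TTheory GRing.Theory Num.Theory.
Local Open Scope ring_scope.
Section Aux.
Variable R : realFieldType.

Definition pmf p s (M : 'M[R]_p) : R :=
  \sum_(g : {ffun 'I_s -> 'I_p}) \det (mxsub g g M).

Lemma pmf_key p q s (B C : 'M[R]_(p, q)) :
  pmf s (B *m C^T) = pmf s (C^T *m B).
Proof.
rewrite /pmf.
have E1 : forall g : {ffun 'I_s -> 'I_p}, \det (mxsub g g (B *m C^T)) =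
  \sum_(sg : 'S_s) \sum_(f : {ffun 'I_s -> 'I_q})
     (-1) ^+ sg * \prod_i (B (g i) (f i) * C (g (sg i)) (f i)).
  move=> g; apply: eq_bigr => sg _; rewrite -big_distrr /=; congr (_ * _).
  under eq_bigr do rewrite !mxE.
  rewrite bigA_distr_bigA; apply: eq_bigr => f' _; apply: eq_bigr => i _.
  by rewrite !mxE.
have E2 : forall f : {ffun 'I_s -> 'I_q}, \det (mxsub f f (C^T *m B)) =
  \sum_(sg : 'S_s) \sum_(g : {ffun 'I_s -> 'I_p})
     (-1) ^+ sg * \prod_i (C (g i) (f i) * B (g i) (f (sg i))).
  move=> f; apply: eq_bigr => sg _; rewrite -big_distrr /=; congr (_ * _).
  under eq_bigr do rewrite !mxE.
  rewrite bigA_distr_bigA; apply: eq_bigr => f' _; apply: eq_bigr => i _.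
  by rewrite !mxE.
under eq_bigr do rewrite E1.
under [RHS]eq_bigr do rewrite E2.
rewrite exchange_big [RHS]exchange_big /=; apply: eq_bigr => sg _.
rewrite [RHS]exchange_big /=; apply: eq_bigr => g _.
pose h (f : {ffun 'I_s -> 'I_q}) := [ffun i => f ((sg^-1)%g i)].
have h_inj : injective h.
  move=> f1 f2 /ffunP E; apply/ffunP => j; have := E (sg j).
  by rewrite !ffunE permK.
rewrite [RHS](reindex_inj h_inj) /=; apply: eq_bigr => f _; congr (_ * _).
rewrite !big_split /= mulrC; congr (_ * _); last first.
  by apply: eq_bigr => i _; rewrite !ffunE permK.
rewrite [RHS](reindex_inj (@perm_inj _ sg)) /=.
by apply: eq_bigr => i _; rewrite !ffunE permK.
Qed.

Definition PM p s (M : 'M[R]_p) : R :=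
  \sum_(S : {set 'I_p} | #|S| == s)
     \det (mxsub (fun i : 'I_#|S| => enum_val i) (fun i : 'I_#|S| => enum_val i) M).

Lemma det_mxsub_perm k (N : 'M[R]_k) s (tau : 'I_s -> 'I_k) :
  injective tau -> s = k -> \det (mxsub tau tau N) = \det N.
Proof.
move=> tinj esk; subst s.
pose sg := perm tinj.
have -> : mxsub tau tau N = perm_mx sg *m (N *m perm_mx sg^-1).
  by rewrite -col_permE -row_permE; apply/matrixP => i j; rewrite !mxE !permE.
by rewrite !det_mulmx !det_perm odd_permV mulrCA -signr_addb addbb /= expr0 mulr1.
Qed.

Lemma det_mxsub_ninj p s (M : 'M[R]_p) (g : 'I_s -> 'I_p) :
  ~~ injectiveb g -> \det (mxsub g g M) = 0.
Proof.
case/injectivePn => i1 [i2 Di12 Eg].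
by apply: (determinant_alternate Di12) => j; rewrite !mxE Eg.
Qed.

Lemma pmf_PM p s (M : 'M[R]_p) : pmf s M = s`!%:R * PM s M.
Proof.
rewrite /pmf (bigID (fun g : {ffun 'I_s -> 'I_p} => injectiveb g)) /=.
rewrite [X in _ + X]big1 ?addr0; last by move=> g /det_mxsub_ninj.
rewrite (partition_big (fun g : {ffun 'I_s -> 'I_p} => g @: [set: 'I_s])
   (fun S => #|S| == s)) /=; last first.
  by move=> g /injectiveP ginj; rewrite card_imset // cardsT card_ord.
rewrite /PM big_distrr /=; apply: eq_bigr => S /eqP cS.
transitivity (\sum_(g : {ffun 'I_s -> 'I_p} | injectiveb g && (g @: [set: 'I_s] == S))
   \det (mxsub (fun i : 'I_#|S| => enum_val i) (fun i : 'I_#|S| => enum_val i) M)).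
  apply: eq_bigr => g /andP[/injectiveP ginj /eqP gS].
  have gS' i : g i \in S by rewrite -gS imset_f // inE.
  pose tau i := enum_rank_in (gS' i) (g i).
  have tauK i : enum_val (tau i) = g i by rewrite /tau enum_rankK_in.
  have -> : mxsub g g M = mxsub tau tau
      (mxsub (fun i : 'I_#|S| => enum_val i) (fun i : 'I_#|S| => enum_val i) M).
    by apply/matrixP => i j; rewrite !mxE !tauK.
  apply: det_mxsub_perm => //.
  by move=> i j Eij; apply: ginj; rewrite -!tauK Eij.
rewrite sumr_const [RHS]mulr_natl; congr (_ *+ _).
transitivity (#|S| ^_ #|'I_s|); last by rewrite card_ord cS ffactnn.
rewrite -card_inj_ffuns_on.
apply: eq_card => f; rewrite [in LHS]unfold_in /= !inE.
case: (boolP (injectiveb f)) => [/injectiveP finj|]; rewrite ?andbF ?andbT //=.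
rewrite eqEcard card_imset // cardsT card_ord cS leqnn andbT.
apply/subsetP/forallP => [H x | H x /imsetP [y _ ->]] //.
by apply: H; rewrite imset_f // inE.
Qed.

Lemma PM_key p q s (B C : 'M[R]_(p, q)) :
  PM s (B *m C^T) = PM s (C^T *m B).
Proof.
have := pmf_key s B C; rewrite !pmf_PM => /mulfI; apply.
by rewrite pnatr_eq0 -lt0n fact_gt0.
Qed.

Lemma rows_mulT m n (A B : 'M[R]_(m, n)) (S : {set 'I_m}) :
  rows_of A S *m (rows_of B S)^T =
  mxsub (fun i : 'I_#|S| => enum_val i) (fun i : 'I_#|S| => enum_val i) (A *m B^T).
Proof.
rewrite mxsub_mul /rows_of; congr (_ *m _).
by apply/matrixP => i j; rewrite !mxE.
Qed.

Lemma det_mxsub_diag k p (f : 'I_k -> 'I_p) (d : 'rV[R]_p) :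
  injective f -> \det (mxsub f f (diag_mx d)) = \prod_i d 0 (f i).
Proof.
move=> finj; have -> : mxsub f f (diag_mx d) = diag_mx (\row_i d 0 (f i)).
  by apply/matrixP => i j; rewrite !mxE (inj_eq finj).
by rewrite det_diag; apply: eq_bigr => i _; rewrite mxE.
Qed.

Lemma PM_diag p s (d : 'rV[R]_p) : PM s (diag_mx d) = elem_sym s (fun i => d 0 i).
Proof.
apply: eq_bigr => S _; rewrite det_mxsub_diag; last exact: enum_val_inj.
by rewrite (big_enum_val (fun x => d 0 x)).
Qed.

Lemma det_mxsub_tri k p (f : 'I_k -> 'I_p) (d : 'rV[R]_p) c a b :
  injective f -> a != b ->
  \det (mxsub f f (diag_mx d + c *: delta_mx a b)) = \prod_i d 0 (f i).
Proof.
move=> finj nab.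
set X := mxsub _ _ _.
have XE i j : X i j = d 0 (f i) *+ (i == j) + c * ((f i == a) && (f j == b))%:R.
  by rewrite !mxE (inj_eq finj).
have Xii i : X i i = d 0 (f i).
  rewrite XE eqxx mulr1n; case: eqP => [-> |_] /=; by rewrite ?(negPf nab) mulr0 addr0.
have neqij (i j : 'I_k) : (i < j)%N -> (i == j) = false.
  by move=> lij; apply/negP => /eqP E; rewrite E ltnn in lij.
case: (boolP [exists i, exists j, [&& f i == a, f j == b & (j < i)%N]]) =>
   [/existsP[i0 /existsP[j0 /and3P[/eqP fi0 /eqP fj0 ji0]]]| Hn].
  rewrite det_trig; first by apply: eq_bigr => i _; rewrite Xii.
  apply/is_trig_mxP => i j lij; rewrite XE neqij // mulr0n add0r.
  case: (f i =P a) => fa; case: (f j =P b) => fb /=; rewrite ?mulr0 //.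
  have ei : i = i0 by apply: finj; rewrite fa fi0.
  have ej : j = j0 by apply: finj; rewrite fb fj0.
  by move: lij; rewrite ei ej => /(ltn_trans ji0); rewrite ltnn.
rewrite -det_tr det_trig; first by apply: eq_bigr => i _; rewrite mxE Xii.
apply/is_trig_mxP => i j lij; rewrite mxE XE eq_sym neqij // mulr0n add0r.
  case: (f j =P a) => fa; case: (f i =P b) => fb /=; rewrite ?mulr0 //.
  case/negP: Hn; apply/existsP; exists j; apply/existsP; exists i.
  by rewrite fa fb !eqxx.
Qed.

Lemma PM_tri p s (d : 'rV[R]_p) c a b : a != b ->
  PM s (diag_mx d + c *: delta_mx a b) = PM s (diag_mx d).
Proof.
move=> nab; apply: eq_bigr => S _.
by rewrite det_mxsub_tri ?det_mxsub_diag //; exact: enum_val_inj.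
Qed.

Lemma elem_sym_remove p s (x : 'I_p -> R) (j : 'I_p) : (1 <= s)%N ->
  \sum_(I : {set 'I_p} | (#|I| == s) && (j \in I)) \prod_(i in I | i != j) x i
  = elem_sym s.-1 (remove_at x j).
Proof.
case: p x j => [|p] x j; first by case: j.
case: s => // s _; rewrite /elem_sym /remove_at /=.
pose h (J : {set 'I_p}) : {set 'I_p.+1} := j |: (lift j @: J).
pose h' (I : {set 'I_p.+1}) : {set 'I_p} := [set k | lift j k \in I].
have jn (J : {set 'I_p}) : j \notin lift j @: J.
  by apply/imsetP => -[k _ /eqP]; rewrite (negbTE (neq_lift j k)).
have hK J : h' (h J) = J.
  apply/setP => k; rewrite !inE eq_sym (negPf (neq_lift j k)) /=.
  by rewrite mem_imset //; exact: lift_inj.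
have h'K (I : {set 'I_p.+1}) : j \in I -> h (h' I) = I.
  move=> jI; apply/setP => y; rewrite !inE; case: (unliftP j y) => [k ->|->].
    rewrite eq_sym (negPf (neq_lift j k)) /= mem_imset; last exact: lift_inj.
    by rewrite inE.
  by rewrite eqxx jI.
rewrite (reindex_onto h h'); last by move=> I /andP[_ /h'K].
apply: eq_big => [J | J _].
  rewrite hK eqxx andbT /h setU11 andbT cardsU1 (jn J) card_imset //.
  exact: lift_inj.
rewrite -(big_imset _ (in2W (@lift_inj _ j))) /=.
apply: eq_bigl => i; rewrite /h !inE; case: eqP => [->|] /=.
  by rewrite (negPf (jn J)).
by rewrite andbT.
Qed.

Lemma elem_sym_bump p s (x : 'I_p -> R) (j : 'I_p) c : (1 <= s)%N ->
  elem_sym s (fun i => x i + c * (i == j)%:R) =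
  elem_sym s x + c * elem_sym s.-1 (remove_at x j).
Proof.
move=> s1; rewrite -elem_sym_remove //.
have split_sum (y : 'I_p -> R) : elem_sym s y =
   \sum_(I : {set 'I_p} | (#|I| == s) && (j \notin I)) \prod_(i in I) y i +
   \sum_(I : {set 'I_p} | (#|I| == s) && (j \in I)) y j * \prod_(i in I | i != j) y i.
  rewrite /elem_sym (bigID (fun I : {set 'I_p} => j \in I)) /= addrC; congr (_ + _).
  by apply: eq_bigr => I /andP[_ jI]; rewrite (bigD1 j).
rewrite !split_sum -addrA; congr (_ + _).
  apply: eq_bigr => I /andP[_ jI]; apply: eq_bigr => i iI.
  have /negPf-> : i != j by apply: contraNneq jI => <-.
  by rewrite mulr0 addr0.
rewrite big_distrr -big_split /=; apply: eq_bigr => I _.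
rewrite eqxx mulr1 mulrDl; congr (_ * _ + _).
by apply: eq_bigr => i /andP[_ /negPf->]; rewrite mulr0 addr0.
by congr (_ * _); apply: eq_bigr => i /andP[_ /negPf->]; rewrite mulr0 addr0.
Qed.

Lemma penrose_exists m n (A : 'M[R]_(m, n)) : A *m A^T \in unitmx ->
  penrose A (A^T *m invmx (A *m A^T)).
Proof.
move=> Ku; split.
- by rewrite mulmxA mulmxV // mul1mx.
- by rewrite -!mulmxA (mulmxA A) mulmxV // mulmx1.
- by rewrite mulmxA mulmxV // trmx1.
- by rewrite !trmx_mul trmxK trmx_inv trmx_mul trmxK mulmxA.
Qed.

Lemma penrose_proj m n (A : 'M[R]_(m, n)) X : penrose A X ->
  A *m A^T \in unitmx -> X *m A = A^T *m invmx (A *m A^T) *m A.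
Proof.
case=> AXA _ _ XAs Ku; set P := A^T *m _ *m A.
have E1 : P *m (X *m A) = P by rewrite /P -!mulmxA (mulmxA A X) AXA.
have E2 : P *m (X *m A) = X *m A.
  by rewrite -{1}XAs trmx_mul /P -!mulmxA (mulmxA A A^T) (mulmxA (invmx _)) mulVmx // mul1mx -trmx_mul XAs.
by rewrite -E2 E1.
Qed.

Lemma pinv_proj m n (A : 'M[R]_(m, n)) : A *m A^T \in unitmx ->
  pinv A *m A = A^T *m invmx (A *m A^T) *m A.
Proof.
move=> Ku; apply: penrose_proj => //; rewrite /pinv.
apply: epsilon_spec; exists (A^T *m invmx (A *m A^T)); exact: penrose_exists.
Qed.

Lemma det_1rank1 k (w : 'cV[R]_k) (v : 'rV[R]_k) :
  \det (1%:M + w *m v) = 1 + (v *m w) 0 0.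
Proof.
pose N := block_mx 1%:M (- w) v (1%:M : 'M[R]_1).
have E1 : N = block_mx 1%:M 0 v 1%:M *m block_mx 1%:M (- w) 0 (1%:M + v *m w).
  rewrite mulmx_block ?mul1mx ?mul0mx ?mulmx0 ?mulmx1 ?addr0 ?add0r mulmxN [1%:M + _]addrC addKr //.
have E2 : N = block_mx (1%:M + w *m v) (- w) 0 1%:M *m block_mx 1%:M 0 v 1%:M.
  by rewrite mulmx_block ?mul1mx ?mul0mx ?mulmx0 ?mulmx1 ?addr0 ?add0r mulNmx addrK.
have := congr1 determinant E2; rewrite {1}E1 !det_mulmx !det_lblock !det_ublock !det1 !mul1r !mulr1.
rewrite (det_mx11 (1%:M + v *m w)) => <-.
by rewrite !mxE.
Qed.

Lemma det_MDL k (K : 'M[R]_k) (u : 'cV[R]_k) (v : 'rV[R]_k) : K \in unitmx ->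
  \det (K + u *m v) = \det K * (1 + (v *m invmx K *m u) 0 0).
Proof.
move=> Ku.
have -> : K + u *m v = K *m (1%:M + (invmx K *m u) *m v).
  by rewrite mulmxDr mulmx1 !mulmxA mulmxV // mul1mx.
by rewrite det_mulmx det_1rank1 mulmxA.
Qed.

Lemma det_gram_sing k n (B : 'M[R]_(k, n)) (M : 'M[R]_n) :
  \det (B *m B^T) = 0 -> \det (B *m M *m B^T) = 0.
Proof.
move/eqP/det0P => [v nz vK]; apply/eqP/det0P; exists v => //.
suff vB : v *m B = 0 by rewrite !mulmxA vB !mul0mx.
have : (v *m B *m (v *m B)^T) 0 0 = 0.
  by rewrite trmx_mul !mulmxA -(mulmxA v) vK mul0mx mxE.
rewrite mxE => /psumr_eq0P H.
have {}H := H (fun j _ => ltac:(rewrite [X in _ * X]mxE -expr2; exact: sqr_ge0)).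
apply/matrixP => i j; rewrite ord1 [RHS]mxE.
by have := H j isT; rewrite [X in _ * X]mxE -expr2 => /eqP; rewrite sqrf_eq0 => /eqP.
Qed.

Lemma per_S k n (B : 'M[R]_(k, n)) (y z : 'rV[R]_n) :
  (y *m (\det (B *m B^T) *: (pinv B *m B)) *m z^T) 0 0 =
  \det (B *m (1%:M + z^T *m y) *m B^T) - \det (B *m B^T).
Proof.
case: (boolP (B *m B^T \in unitmx)) => Ku.
  rewrite pinv_proj // mulmxDr mulmx1 mulmxDl.
  have -> : B *m (z^T *m y) *m B^T = (B *m z^T) *m (y *m B^T) by rewrite !mulmxA.
  rewrite det_MDL // -scalemxAr -scalemxAl mxE mulrDr mulr1 [_ + _ * _]addrC addrK.
  by congr (_ * _); rewrite !mulmxA.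
have K0 : \det (B *m B^T) = 0 by apply/eqP; move: Ku; rewrite unitmxE unitfE negbK.
by rewrite K0 det_gram_sing // subr0 scale0r mulmx0 mul0mx mxE.
Qed.

Lemma PM_diag' p s (d : 'I_p -> R) : PM s (diag_mx (\row_i d i)) = elem_sym s d.
Proof.
by rewrite PM_diag; apply: eq_bigr => I _; apply: eq_bigr => i _; rewrite mxE.
Qed.

Lemma PM_conj p s (U X : 'M[R]_p) : U^T *m U = 1%:M -> PM s (U *m X *m U^T) = PM s X.
Proof. by move=> HU; rewrite PM_key mulmxA HU mul1mx. Qed.

Lemma entry_rc n (M X P : 'M[R]_n) j k :
  (M *m X *m P) j k = (row j M *m X *m col k P) 0 0.
Proof.
transitivity ((col k (row j (M *m X *m P))) 0 0); first by rewrite !mxE.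
by rewrite colE rowE [in RHS]rowE [in RHS]colE !mulmxA.
Qed.

Section Sig.
Variables (m n : nat) (Sg : 'M[R]_(m, n)).
Hypothesis Hd : forall (i : 'I_m) (j : 'I_n), (i : nat) != j -> Sg i j = 0.

Lemma sig_sigT : Sg *m Sg^T = diag_mx (\row_i (Sg *m Sg^T) i i).
Proof.
apply/matrixP => a b; rewrite [RHS]mxE [in RHS]mxE.
case: (eqVneq a b) => [<-|nab]; first by rewrite mulr1n.
rewrite mulr0n !mxE; apply: big1 => l _; rewrite mxE.
case: (eqVneq (a : nat) l) => [al|/Hd->]; last by rewrite mul0r.
rewrite (@Hd b l) ?mulr0 //; apply: contraNneq nab => bl.
by apply/eqP; apply: val_inj; rewrite /= al bl.
Qed.

Lemma col_sig_out (j : 'I_n) : (m <= j)%N -> col j Sg = 0.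
Proof.
move=> hj; apply/matrixP => i z; rewrite !mxE Hd //.
by apply: contraTneq (ltn_ord i) => ->; rewrite -leqNgt.
Qed.

Lemma col_sig_in (j : 'I_n) (a : 'I_m) : (a : nat) = j -> col j Sg = Sg a j *: delta_mx a 0.
Proof.
move=> aj; apply/matrixP => i z; rewrite !mxE ord1 eqxx andbT.
case: (eqVneq i a) => [->|nia]; first by rewrite mulr1.
rewrite mulr0 Hd //; apply: contraNneq nia => ij.
by apply/eqP; apply: val_inj; rewrite /= ij aj.
Qed.

Lemma final_entry s (s1 : (1 <= s)%N) (j k : 'I_n) :
  let lam := fun i => (Sg *m Sg^T) i i in
  PM s (Sg *m Sg^T + col k Sg *m (col j Sg)^T) - PM s (Sg *m Sg^T) =
  (Sg^T *m diag_mx (\row_i elem_sym s.-1 (remove_at lam i)) *m Sg) j k.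
Proof.
move=> lam.
have RE : (Sg^T *m diag_mx (\row_i elem_sym s.-1 (remove_at lam i)) *m Sg) j k =
    \sum_a Sg a j * Sg a k * elem_sym s.-1 (remove_at lam a).
  rewrite mul_mx_diag mxE; apply: eq_bigr => a _; rewrite !mxE.
  by rewrite mulrAC.
rewrite RE.
case: (ltnP j m) => hj; last first.
  rewrite (col_sig_out (j := j)) // trmx0 mulmx0 addr0 subrr; symmetry; apply: big1 => a _.
  by rewrite (@Hd a j) ?mul0r //; apply: contraTneq (ltn_ord a) => ->; rewrite -leqNgt.
case: (ltnP k m) => hk; last first.
  rewrite (col_sig_out (j := k)) // mul0mx addr0 subrr; symmetry; apply: big1 => a _.
  by rewrite (@Hd a k) ?mulr0 ?mul0r //; apply: contraTneq (ltn_ord a) => ->; rewrite -leqNgt.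
pose a := Ordinal hj; pose b := Ordinal hk.
rewrite (@col_sig_in j a) // (@col_sig_in k b) //.
rewrite linearZ /= trmx_delta -scalemxAl -scalemxAr scalerA mul_delta_mx.
have Sgi0 (i : 'I_m) (l : 'I_n) (c : 'I_m) : (c : nat) = l -> i != c -> Sg i l = 0.
  move=> cl nic; apply: Hd; apply: contraNneq nic => il.
  by apply/eqP; apply: val_inj; rewrite /= il cl.
case: (eqVneq a b) => [eab|nab].
  have ejk : j = k by apply: val_inj; rewrite /= -[j : nat]/(a : nat) eab.
  subst k; have eb : b = a by apply: val_inj.
  rewrite eb.
  have lama : Sg a j * Sg a j = lam a.
    rewrite /lam mxE (bigD1 j) //= big1 ?addr0; first by rewrite mxE.
    move=> l nlj; rewrite mxE (@Hd a l) ?mul0r //.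
    by apply: contraNneq nlj => al; apply/eqP; apply: val_inj; rewrite /= -al.
  rewrite lama sig_sigT.
  have -> : diag_mx (\row_i (Sg *m Sg^T) i i) + lam a *: delta_mx a a =
      diag_mx (\row_i (lam i + lam a * (i == a)%:R)).
    apply/matrixP => u v; rewrite !mxE.
    case: (eqVneq u v) => [<-|nuv]; last first.
      have /negPf-> : ~~ ((u == a) && (v == a)) by apply: contra nuv => /andP[/eqP-> /eqP->].
      by rewrite !mulr0n mulr0 addr0.
    by rewrite andbb !mulr1n /lam [in RHS]mxE.
  rewrite !PM_diag' elem_sym_bump // addrAC subrr add0r.
  rewrite (bigD1 a) //= big1 ?addr0 -?lama //.
  by move=> i nia; rewrite (Sgi0 i j a) // !mul0r.
rewrite sig_sigT PM_tri; last by rewrite eq_sym.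
rewrite subrr; symmetry; apply: big1 => i _.
case: (eqVneq i a) => [->|nia]; last by rewrite (Sgi0 i j a) // !mul0r.
by rewrite (Sgi0 a k b) ?mulr0 ?mul0r.
Qed.
End Sig.
End Aux.

Unset Implicit Arguments.

Theorem lemma2p1 (R : realFieldType) (m n : nat) (A : 'M[R]_(m, n))
  (U : 'M[R]_m) (Sigma : 'M[R]_(m, n)) (V : 'M[R]_n)
  (HU : U^T *m U = 1%:M) (HV : V^T *m V = 1%:M)
  (Hdiag : forall (i : 'I_m) (j : 'I_n), (i : nat) != j -> Sigma i j = 0)
  (Hnneg : forall (i : 'I_m) (j : 'I_n), 0 <= Sigma i j)
  (Hsorted : forall (i1 i2 : 'I_m) (j1 j2 : 'I_n),
      (i1 : nat) = j1 -> (i2 : nat) = j2 -> (i1 <= i2)%N -> Sigma i2 j2 <= Sigma i1 j1)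
  (HA : A = U *m Sigma *m V^T)
  (s : nat) (Hs1 : (1 <= s)%N) (Hsr : (s <= \rank A)%N) :
  let lambda : 'I_m -> R := fun i => (Sigma *m Sigma^T) i i in
  let H_s : 'M[R]_m :=
    (elem_sym s lambda)^-1 *:
      (U *m diag_mx (\row_(i < m) elem_sym s.-1 (remove_at lambda i)) *m U^T) in
  vol_expect_proj s A = A^T *m H_s *m A.
Proof.
move=> lambda H_s.
have VVt : V *m V^T = 1%:M by apply: mulmx1C.
have SS : Sigma *m Sigma^T = diag_mx (\row_i lambda i) by apply: sig_sigT.
have AMAt (M : 'M[R]_n) : A *m M *m A^T =
    U *m (Sigma *m (V^T *m M *m V) *m Sigma^T) *m U^T.
  by rewrite HA !trmx_mul !trmxK !mulmxA.
have AAt : A *m A^T = U *m (Sigma *m Sigma^T) *m U^T.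
  by have := AMAt 1%:M; rewrite !mulmx1 HV mulmx1.
have Zdef : \sum_(J : {set 'I_m} | #|J| == s) \det (rows_of A J *m (rows_of A J)^T)
    = elem_sym s lambda.
  transitivity (PM s (A *m A^T)); first by apply: eq_bigr => J _; rewrite rows_mulT.
  by rewrite AAt PM_conj // SS PM_diag'.
pose D := diag_mx (\row_(i < m) elem_sym s.-1 (remove_at lambda i)).
suff main : \sum_(S : {set 'I_m} | #|S| == s)
    \det (rows_of A S *m (rows_of A S)^T) *: (pinv (rows_of A S) *m rows_of A S)
    = A^T *m (U *m D *m U^T) *m A.
  rewrite /vol_expect_proj /H_s -scalemxAr -scalemxAl -main scaler_sumr.
  apply: eq_bigr => S _.
  by rewrite /vol_prob Zdef scalerA mulrC.
have conjK (X : 'M[R]_n) : X = V *m (V^T *m X *m V) *m V^T.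
  by rewrite !mulmxA VVt mul1mx -mulmxA VVt mulmx1.
rewrite [LHS]conjK [RHS]conjK; congr (_ *m _ *m _).
have RHSE : V^T *m (A^T *m (U *m D *m U^T) *m A) *m V = Sigma^T *m D *m Sigma.
  rewrite HA !trmx_mul !trmxK !mulmxA HV mul1mx -(mulmxA _ U^T U) HU mulmx1.
  by rewrite -(mulmxA _ U^T U) HU mulmx1 -(mulmxA _ V^T V) HV mulmx1.
rewrite RHSE; apply/matrixP => j k.
rewrite entry_rc.
have zE : col k V = (row k V^T)^T by rewrite tr_row trmxK.
rewrite zE; set y := row j V^T; set z := row k V^T.
rewrite mulmx_sumr mulmx_suml summxE.
under eq_bigr do rewrite per_S.
rewrite sumrB.
have E1 : \sum_(S : {set 'I_m} | #|S| == s)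
    \det (rows_of A S *m (1%:M + z^T *m y) *m (rows_of A S)^T)
    = PM s (A *m (1%:M + z^T *m y) *m A^T).
  apply: eq_bigr => S _; rewrite /rows_of mul_rowsub_mx.
  exact: (congr1 determinant (rows_mulT (A *m _) A S)).
have E2 : \sum_(S : {set 'I_m} | #|S| == s) \det (rows_of A S *m (rows_of A S)^T)
    = PM s (A *m A^T).
  by apply: eq_bigr => S _; rewrite rows_mulT.
rewrite E1 E2 AMAt PM_conj // AAt PM_conj //.
have ME : Sigma *m (V^T *m (1%:M + z^T *m y) *m V) *m Sigma^T =
    Sigma *m Sigma^T + col k Sigma *m (col j Sigma)^T.
  rewrite /y /z tr_row trmxK tr_col !colE !rowE.
  rewrite mulmxDr mulmx1 mulmxDl HV !mulmxA HV mul1mx -(mulmxA _ V^T V) HV mulmx1.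
  by rewrite mulmxDr mulmx1 mulmxDl !mulmxA.
rewrite ME; exact: final_entry.
Qed.
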